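(* Let $S=\{(X_m,y_m)\}_{m=1}^T\in\mathcal{S}_T$ be fitted in the cyclic ordering, let $n\ge1$, $k=nT$, and define the end-of-cycle average iterate $\bar w_n=\frac1n\sum_{n'=1}^n w_{Tn'}$. Then $$\frac1T\sum_{m=1}^T\|X_m\bar w_n-y_m\|^2\le\frac{T-1}{2n}\le\frac{T^2}{2k}.$$
   Context: Let $d\ge 1$, $T\ge1$. A task is a pair $(X_m,y_m)$ with $X_m\in\mathbb{R}^{n_m\times d}$, $y_m\in\mathbb{R}^{n_m}$ and $\operatorname{rank}(X_m)<d$. $\mathcal{S}_T$ denotes the set of collections $S=\{(X_m,y_m)\}_{m=1}^T$ of $T$ tasks such that $\|X_m\|\le 1$ (spectral norm) for all $m$ and there exists $w\in\mathbb{R}^d$ with $\|w\|\le 1$ and $y_m=X_mw$ for all $m$. Given $S$ and an ordering $\tau:\mathbb{N}^+\to\{1,\dots,T\}$, the iterates are $w_0=0$ and $w_t=w_{t-1}+X_{\tau(t)}^+(y_{\tau(t)}-X_{\tau(t)}w_{t-1})$, with $A^+$ the Moore–Penrose pseudoinverse. The cyclic ordering is $\tau(t)=((t-1)\bmod T)+1$. *)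

(* Defs.v *)
From mathcomp Require Import all_boot all_order all_algebra.
From mathcomp Require Import reals.
Set Implicit Arguments. Unset Strict Implicit. Unset Printing Implicit Defensive.
Import Order.TTheory GRing.Theory Num.Theory.
Local Open Scope ring_scope.

Definition sqnorm (R : realType) (p : nat) (v : 'cV[R]_p) : R :=
  \sum_(i < p) v i 0 ^+ 2.

(* B is the Moore-Penrose pseudoinverse of A (the four Penrose conditions,
   which characterise it uniquely). *)
Definition is_pinv (R : realType) (p q : nat) (A : 'M[R]_(p, q)) (B : 'M[R]_(q, p)) : Prop :=
  [/\ A *m B *m A = A, B *m A *m B = B, (A *m B)^T = A *m B & (B *m A)^T = B *m A].

Definition specnorm_le1 (R : realType) (p q : nat) (A : 'M[R]_(p, q)) : Prop :=
  forall v : 'cV[R]_q, sqnorm (A *m v) <= sqnorm v.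

(* Iterates under the cyclic ordering, tasks indexed 0..T-1:
   w_0 = 0, w_t = w_{t-1} + P_{tau t} (y_{tau t} - X_{tau t} w_{t-1}),
   where tau t = (t-1) mod T (0-based), P_m the pseudoinverse of X_m. *)
Fixpoint cyc_iter (R : realType) (d T : nat) (hT : (0 < T)%N) (nm : 'I_T -> nat)
  (X : forall m : 'I_T, 'M[R]_(nm m, d)) (y : forall m : 'I_T, 'cV[R]_(nm m))
  (P : forall m : 'I_T, 'M[R]_(d, nm m)) (t : nat) : 'cV[R]_d :=
  match t with
  | 0 => 0
  | t'.+1 =>
      let w := cyc_iter hT X y P t' in
      let m := Ordinal (ltn_pmod t' hT) in
      w + P m *m (y m - X m *m w)
  end.

(* Main.v *)
Require Import Defs.
From mathcomp Require Import all_boot all_order all_algebra.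
From mathcomp Require Import reals.
Import Order.TTheory GRing.Theory Num.Theory.
Local Open Scope ring_scope.
From mathcomp Require Import ring lra.
Lemma cs_step {R:realType} (S x Q N : R) : 0 <= N -> 0 <= Q -> S^+2 <= N * Q -> (S + x)^+2 <= (N+1)*(Q + x^+2).
Proof.
move=> h1 h2 h3.
have [N0|Np] := eqVneq N 0.
  rewrite N0 mul0r in h3; have S0 : S = 0.
    by apply/eqP; rewrite -sqrf_eq0 Order.POrderTheory.eq_le h3 sqr_ge0.
  rewrite S0 N0; nra.
have hN : 0 < N by rewrite lt_def Np h1.
have hs := sqr_ge0 (S - N * x).
have h : 0 <= N * (Q + N * x^+2 - 2 * S * x) by nra.
rewrite pmulr_rge0 // in h. nra.
Qed.

Lemma cs_sum {R : realType} (k : nat) (a : nat -> R) :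
  (\sum_(i < k) a i) ^+ 2 <= k%:R * \sum_(i < k) a i ^+ 2.
Proof.
elim: k => [|k IH]; first by rewrite !big_ord0 expr0n /= mul0r.
rewrite !big_ord_recr /= -natr1; apply: cs_step => //.
by apply: sumr_ge0 => i _; apply: sqr_ge0.
Qed.

Lemma sqnorm_ge0 {R : realType} {p : nat} (v : 'cV[R]_p) : 0 <= sqnorm v.
Proof. by apply: sumr_ge0 => i _; apply: sqr_ge0. Qed.

Lemma sqnorm_sum {R : realType} {p : nat} (k : nat) (v : nat -> 'cV[R]_p) :
  sqnorm (\sum_(i < k) v i) <= k%:R * \sum_(i < k) sqnorm (v i).
Proof.
rewrite /sqnorm.
under eq_bigr do rewrite summxE.
apply: (le_trans (y := \sum_(r < p) k%:R * \sum_(i < k) v i r 0 ^+ 2)).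
  by apply: ler_sum => r _; have /= := cs_sum k (fun i => v i r 0).
by rewrite -mulr_sumr exchange_big.
Qed.

Lemma sqnorm_scale {R : realType} {p : nat} (c : R) (v : 'cV[R]_p) :
  sqnorm (c *: v) = c ^+ 2 * sqnorm v.
Proof.
rewrite /sqnorm mulr_sumr; apply: eq_bigr => i _; by rewrite mxE exprMn.
Qed.

Lemma sqnorm_opp {R : realType} {p : nat} (v : 'cV[R]_p) : sqnorm (- v) = sqnorm v.
Proof. by apply: eq_bigr => i _; rewrite mxE sqrrN. Qed.

Definition ip (R : realType) (p : nat) (u v : 'cV[R]_p) : R := \sum_(i < p) u i 0 * v i 0.

Arguments ip {R p}.
Lemma ipE {R : realType} {p : nat} (u v : 'cV[R]_p) : ip u v = (u^T *m v) 0 0.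
Proof. by rewrite mxE; apply: eq_bigr => i _; rewrite mxE. Qed.

Lemma sqnormD {R : realType} {p : nat} (u v : 'cV[R]_p) :
  sqnorm (u + v) = sqnorm u + sqnorm v + 2 * ip u v.
Proof.
rewrite /sqnorm /ip mulr_sumr -!big_split /=; apply: eq_bigr => i _.
by rewrite mxE sqrrD; ring.
Qed.

Lemma pythag {R : realType} {p : nat} (Pi : 'M[R]_p) (e : 'cV[R]_p) :
  Pi *m Pi = Pi -> Pi^T = Pi ->
  sqnorm e = sqnorm (e - Pi *m e) + sqnorm (Pi *m e).
Proof.
move=> hid hsym.
have H : ip (e - Pi *m e) (Pi *m e) = 0.
  rewrite ipE mulmxA -hsym -trmx_mul hsym mulmxBr mulmxA hid subrr.
  by rewrite trmx0 mul0mx mxE.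
by rewrite -{1}(subrK (Pi *m e) e) (sqnormD (e - Pi *m e)) H mulr0 addr0.
Qed.

Lemma trisum {R : realType} (T : nat) :
  \sum_(m < T) ((T - m.+1)%N%:R : R) = T%:R * (T%:R - 1) / 2.
Proof.
elim: T => [|T IH]; first by rewrite big_ord0 mul0r mul0r.
rewrite big_ord_recl /= subn1 /=.
under eq_bigr do rewrite /bump /= add1n subSS.
by rewrite IH -natr1; field.
Qed.

Theorem mainTheorem17 (R : realType) (d T : nat) (hd : (1 <= d)%N) (hT : (0 < T)%N)
  (nm : 'I_T -> nat)
  (X : forall m : 'I_T, 'M[R]_(nm m, d)) (y : forall m : 'I_T, 'cV[R]_(nm m))
  (P : forall m : 'I_T, 'M[R]_(d, nm m))
  (hP : forall m, is_pinv (X m) (P m))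
  (hrank : forall m, (\rank (X m) < d)%N)
  (hnorm : forall m, specnorm_le1 (X m))
  (hreal : exists w : 'cV[R]_d, sqnorm w <= 1 /\ forall m, y m = X m *m w)
  (n : nat) (hn : (1 <= n)%N) :
  let k := (n * T)%N in
  let wbar := (n%:R : R)^-1 *: \sum_(1 <= n' < n.+1) cyc_iter hT X y P (T * n') in
  (T%:R : R)^-1 * (\sum_(m < T) sqnorm (X m *m wbar - y m)) <= ((T%:R : R) - 1) / (2 * n%:R)
  /\ ((T%:R : R) - 1) / (2 * n%:R) <= ((T%:R : R) ^+ 2) / (2 * k%:R).
Proof.
move=> k wbar.
case: hreal => ws [hws hy].
pose E t := cyc_iter hT X y P t - ws.
pose mo t := Ordinal (ltn_pmod t hT).
pose dl t := P (mo t) *m (X (mo t) *m E t).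
have Estep t : E t.+1 = E t - dl t.
  rewrite /E /dl /mo /= hy.
  set w := cyc_iter _ _ _ _ _; set M := Ordinal _.
  by rewrite /E !mulmxBr opprB addrAC.
have proj m : (P m *m X m) *m (P m *m X m) = P m *m X m /\ (P m *m X m)^T = P m *m X m.
  by case: (hP m) => h1 h2 h3 h4; split => //; rewrite mulmxA h2.
have Npy t : sqnorm (E t) = sqnorm (E t.+1) + sqnorm (dl t).
  rewrite Estep /dl mulmxA; case: (proj (mo t)) => h1 h2; exact: pythag.
have Xz t : X (mo t) *m E t.+1 = 0.
  rewrite Estep /dl mulmxBr !mulmxA; case: (hP (mo t)) => h1 _ _ _.
  by rewrite h1 subrr.
have tele a j : E a - E (a + j)%N = \sum_(i < j) dl (a + i)%N.
  elim: j => [|j IH]; first by rewrite addn0 subrr big_ord0.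
  rewrite big_ord_recr /= -IH addnS Estep opprB.
  by rewrite addrA addrAC.
have Ntele a j : sqnorm (E a) - sqnorm (E (a + j)%N) = \sum_(i < j) sqnorm (dl (a + i)%N).
  elim: j => [|j IH]; first by rewrite addn0 subrr big_ord0.
  rewrite big_ord_recr /= -IH addnS (Npy (a + j)%N); lra.
have Nmono a j : sqnorm (E (a + j)%N) <= sqnorm (E a).
  have := Ntele a j; have : 0 <= \sum_(i < j) sqnorm (dl (a + i)%N).
    by apply: sumr_ge0 => i _; apply: sqnorm_ge0.
  lra.
have seg a j : sqnorm (E a - E (a + j)%N) <= j%:R * (sqnorm (E a) - sqnorm (E (a + j)%N)).
  by rewrite tele Ntele; apply: (sqnorm_sum j (fun i => dl (a + i)%N)).
have momod i (m : 'I_T) : mo (T * i + m)%N = m.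
  by apply: val_inj => /=; rewrite mulnC modnMDl modn_small.
pose c : R := T%:R * (T%:R - 1) / 2.
have cyc i : \sum_(m < T) sqnorm (X m *m E (T * i + T)%N)
    <= c * (sqnorm (E (T * i)%N) - sqnorm (E (T * i + T)%N)).
  rewrite /c -trisum mulr_suml; apply: ler_sum => m _.
  set s := (T * i)%N.
  have hX : X m *m E (s + T)%N = - (X m *m (E (s + m).+1 - E (s + T)%N)).
    by have := Xz (s + m)%N; rewrite momod => h; rewrite (mulmxBr (X m) (E (s + m).+1)) h sub0r opprK.
  rewrite hX sqnorm_opp; apply: le_trans (hnorm m _) _.
  have hk : ((s + m).+1 + (T - m.+1))%N = (s + T)%N.
    by rewrite -addnS -addnA subnKC // ltn_ord.
  have := seg (s + m).+1 (T - m.+1)%N; rewrite hk => h; apply: le_trans h _.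
  apply: ler_wpM2l; first exact: ler0n.
  have h1 := Nmono s m.+1; rewrite addnS in h1; lra.
have N0 : sqnorm (E 0%N) <= 1 by rewrite /E /= sub0r sqnorm_opp.
have T1 : 1 <= T%:R :> R by rewrite ler1n.
have c0 : 0 <= c.
  rewrite /c; apply: divr_ge0 => //; apply: mulr_ge0; first exact: ler0n.
  by rewrite subr_ge0.
have telN j : \sum_(i < j) (sqnorm (E (T * i)%N) - sqnorm (E (T * i + T)%N))
    = sqnorm (E 0%N) - sqnorm (E (T * j)%N).
  elim: j => [|j IH]; first by rewrite big_ord0 muln0 subrr.
  rewrite big_ord_recr /= IH (mulnS T j) (addnC T); lra.
have total : \sum_(i < n) \sum_(m < T) sqnorm (X m *m E (T * i.+1)%N) <= c.
  apply: (le_trans (y := \sum_(i < n) c * (sqnorm (E (T * i)%N) - sqnorm (E (T * i + T)%N)))).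
    by apply: ler_sum => i _; rewrite (mulnS T i) (addnC T); exact: cyc.
  rewrite -mulr_sumr telN.
  have := Nmono 0%N (T * n)%N; rewrite add0n => h.
  have hN := sqnorm_ge0 (E (T * n)%N).
  nra.
have hn0 : n%:R != 0 :> R by rewrite pnatr_eq0 -lt0n.
have hT0 : T%:R != 0 :> R by rewrite pnatr_eq0 -lt0n.
have hwbar : wbar - ws = n%:R^-1 *: \sum_(i < n) E (T * i.+1)%N.
  rewrite /wbar big_add1 /= big_mkord /E sumrB sumr_const card_ord scalerBr.
  by rewrite -scaler_nat scalerA mulVf ?scale1r.
split.
  have key : \sum_(m < T) sqnorm (X m *m wbar - y m) <= n%:R^-1 * c.
    apply: (le_trans (y := \sum_(m < T) n%:R^-1 * \sum_(i < n) sqnorm (X m *m E (T * i.+1)%N))).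
      apply: ler_sum => m _; rewrite hy -mulmxBr hwbar -scalemxAr sqnorm_scale mulmx_sumr.
      have h := sqnorm_sum n (fun i => X m *m E (T * i.+1)%N).
      apply: le_trans (ler_wpM2l _ h) _; first exact: sqr_ge0.
      rewrite le_eqVlt; apply/orP; left; apply/eqP; field.
      exact: hn0.
    rewrite -mulr_sumr exchange_big /=; apply: ler_wpM2l; last exact: total.
    by rewrite invr_ge0 ler0n.
  apply: le_trans (ler_wpM2l _ key) _; first by rewrite invr_ge0 ler0n.
  rewrite /c le_eqVlt; apply/orP; left; apply/eqP; field.
  by rewrite hn0 hT0.
rewrite /k natrM.
have -> : (T%:R : R) ^+ 2 / (2 * (n%:R * T%:R)) = T%:R / (2 * n%:R).
  by field; rewrite hn0 hT0.
apply: ler_wpM2r; last by rewrite gerBl ler01.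
rewrite invr_ge0; apply: mulr_ge0; [lra | exact: ler0n].
Qed.
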